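(* Let $\Gamma\subset\mathbb{R}^2$ be a lattice, let $\Lambda>0$ be a smooth $\Gamma$-periodic function on $\mathbb{R}^2$, let $n\ge3$, and let $F=\sum_{i=0}^n a_i(x,y)p_1^{n-i}p_2^i$ with smooth $\Gamma$-periodic $a_i$ satisfy $\{H,F\}=0$, $H=\frac{p_1^2+p_2^2}{2\Lambda}$. Assume the Kolokoltsov relations hold with constant $c_1=0$ and some constant $c_2$, i.e. $$a_{n-1}=\sum_{j\ge 0,\ 2j\le n-3}(-1)^j a_{n-3-2j},\qquad a_n=c_2+\sum_{j\ge 0,\ 2j\le n-2}(-1)^j a_{n-2-2j}.$$ Define $P,Q,R$ as follows. If $n=2k$: with $S_e=\sum_{j=0}^{k-1}(-1)^j(n-2j)a_{2j}$, $S_o=\sum_{j=0}^{k-2}(-1)^j(n-2-2j)a_{2j+1}$, put $P=S_e\Lambda$, $Q=-S_o\Lambda$, $R=(-S_e+(-1)^k nc_2)\Lambda$. If $n=2k+1$: with $T_e=\sum_{j=0}^{k-1}(-1)^j(n-1-2j)a_{2j}$, $T_o=\sum_{j=0}^{k-1}(-1)^j(n-1-2j)a_{2j+1}$, put $P=T_o\Lambda$, $Q=T_e\Lambda$, $R=(-T_o+(-1)^k nc_2)\Lambda$. Then $$P_x+Q_y=0,\qquad Q_x+R_y=0.$$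
   Context: The Poisson bracket is $\{H,F\}=\sum_{j=1}^2\left(\frac{\partial H}{\partial q^j}\frac{\partial F}{\partial p_j}-\frac{\partial H}{\partial p_j}\frac{\partial F}{\partial q^j}\right)$ with $(q^1,q^2)=(x,y)$; $\{H,F\}=0$ means $F$ is a first integral of the geodesic flow of the metric $\Lambda(dx^2+dy^2)$ on the torus $\mathbb{R}^2/\Gamma$. By a theorem of Kolokoltsov, for any such integral there are constants $c_1,c_2$ with $a_{n-1}=c_1+\sum_{j\ge0,2j\le n-3}(-1)^ja_{n-3-2j}$ and $a_n=c_2+\sum_{j\ge0,2j\le n-2}(-1)^ja_{n-2-2j}$; $c_1=0$ can be arranged by a rotation of the $(x,y)$-plane. *)

(* Defs.v *)
From Stdlib Require Import Reals Lra Lia List.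
Open Scope R_scope.

Definition cont2 (f : R -> R -> R) : Prop :=
  forall x y eps, 0 < eps -> exists d, 0 < d /\
    forall u v, Rabs (u - x) < d -> Rabs (v - y) < d -> Rabs (f u v - f x y) < eps.

(* C^infinity on R^2: all iterated partial derivatives (any order of
   differentiation, false = d/dx, true = d/dy) exist and are continuous. *)
Definition smooth2 (f : R -> R -> R) : Prop :=
  exists D : list bool -> R -> R -> R, D nil = f /\
    forall l, cont2 (D l) /\
      (forall x y, derivable_pt_lim (fun t => D l t y) x (D (false :: l) x y)) /\
      (forall x y, derivable_pt_lim (fun t => D l x t) y (D (true :: l) x y)).

(* Gamma = Z e1 + Z e2 with e1, e2 linearly independent *)
Definition is_lattice_basis (e1x e1y e2x e2y : R) : Prop :=
  e1x * e2y - e1y * e2x <> 0.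

(* Gamma-periodicity (invariance under the generators, hence under Gamma) *)
Definition periodic (e1x e1y e2x e2y : R) (f : R -> R -> R) : Prop :=
  forall x y, f (x + e1x) (y + e1y) = f x y /\ f (x + e2x) (y + e2y) = f x y.

Definition poisson_zero (H F : R -> R -> R -> R -> R) : Prop :=
  forall x y p1 p2, exists Hx Hy Hp1 Hp2 Fx Fy Fp1 Fp2,
    derivable_pt_lim (fun t => H t y p1 p2) x Hx /\
    derivable_pt_lim (fun t => H x t p1 p2) y Hy /\
    derivable_pt_lim (fun t => H x y t p2) p1 Hp1 /\
    derivable_pt_lim (fun t => H x y p1 t) p2 Hp2 /\
    derivable_pt_lim (fun t => F t y p1 p2) x Fx /\
    derivable_pt_lim (fun t => F x t p1 p2) y Fy /\
    derivable_pt_lim (fun t => F x y t p2) p1 Fp1 /\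
    derivable_pt_lim (fun t => F x y p1 t) p2 Fp2 /\
    Hx * Fp1 - Hp1 * Fx + Hy * Fp2 - Hp2 * Fy = 0.

Definition hamiltonian (Lam : R -> R -> R) : R -> R -> R -> R -> R :=
  fun x y p1 p2 => (p1 ^ 2 + p2 ^ 2) / (2 * Lam x y).

Definition polyF (n : nat) (a : nat -> R -> R -> R) : R -> R -> R -> R -> R :=
  fun x y p1 p2 => sum_f_R0 (fun i => a i x y * p1 ^ (n - i) * p2 ^ i) n.

Definition kolokoltsov (n : nat) (a : nat -> R -> R -> R) (c2 : R) : Prop :=
  forall x y,
    a (n - 1)%nat x y =
      sum_f_R0 (fun j => (-1) ^ j * a (n - 3 - 2 * j)%nat x y) (Nat.div2 (n - 3)) /\
    a n x y =
      c2 + sum_f_R0 (fun j => (-1) ^ j * a (n - 2 - 2 * j)%nat x y) (Nat.div2 (n - 2)).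

Definition Se (n k : nat) (a : nat -> R -> R -> R) (x y : R) : R :=
  sum_f_R0 (fun j => (-1) ^ j * (INR n - 2 * INR j) * a (2 * j)%nat x y) (k - 1).
Definition So (n k : nat) (a : nat -> R -> R -> R) (x y : R) : R :=
  sum_f_R0 (fun j => (-1) ^ j * (INR n - 2 - 2 * INR j) * a (2 * j + 1)%nat x y) (k - 2).
Definition Te (n k : nat) (a : nat -> R -> R -> R) (x y : R) : R :=
  sum_f_R0 (fun j => (-1) ^ j * (INR n - 1 - 2 * INR j) * a (2 * j)%nat x y) (k - 1).
Definition To (n k : nat) (a : nat -> R -> R -> R) (x y : R) : R :=
  sum_f_R0 (fun j => (-1) ^ j * (INR n - 1 - 2 * INR j) * a (2 * j + 1)%nat x y) (k - 1).

Definition div_free (P Q R0 : R -> R -> R) : Prop :=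
  forall x y,
    (exists Px Qy, derivable_pt_lim (fun t => P t y) x Px /\
                   derivable_pt_lim (fun t => Q x t) y Qy /\ Px + Qy = 0) /\
    (exists Qx Ry, derivable_pt_lim (fun t => Q t y) x Qx /\
                   derivable_pt_lim (fun t => R0 x t) y Ry /\ Qx + Ry = 0).

(* Main.v *)
Require Import Defs.
From Stdlib Require Import Reals Lra Lia FunctionalExtensionality ClassicalEpsilon List.
Open Scope R_scope.

Lemma dval f x l l' : derivable_pt_lim f x l -> l = l' -> derivable_pt_lim f x l'.
Proof. intros H ->; exact H. Qed.

Lemma sum_eq_le (f g : nat -> R) N : (forall i, (i <= N)%nat -> f i = g i) ->
  sum_f_R0 f N = sum_f_R0 g N.
Proof.
  induction N; intros H; simpl. apply H; lia.
  rewrite IHN by (intros; apply H; lia). rewrite H by lia. reflexivity.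
Qed.

Lemma sum_lin2 (f g h : nat -> R) al be N :
  (forall l, f l = al * g l + be * h l) ->
  sum_f_R0 f N = al * sum_f_R0 g N + be * sum_f_R0 h N.
Proof. intros H; induction N; simpl; rewrite ?IHN, H; ring. Qed.

Lemma sum_ext_bound (f g : nat -> R) M N : (M <= N)%nat ->
  (forall j, (j <= M)%nat -> f j = g j) ->
  (forall j, (M < j)%nat -> (j <= N)%nat -> g j = 0) ->
  sum_f_R0 f M = sum_f_R0 g N.
Proof.
  intros HMN Hfg Hg. induction N.
  - assert (M = 0%nat) by lia. subst. simpl. apply Hfg; lia.
  - destruct (Nat.eq_dec M (S N)) as [E|E].
    + subst. apply sum_eq_le. auto.
    + rewrite tech5, <- IHN by (intros; try apply Hg; lia). rewrite (Hg (S N)) by lia. ring.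
Qed.

Lemma sum_rev (f : nat -> R) N : sum_f_R0 f N = sum_f_R0 (fun j => f (N - j)%nat) N.
Proof.
  induction N. simpl. reflexivity.
  rewrite (decomp_sum (fun j => f (S N - j)%nat)) by lia. simpl pred.
  rewrite tech5, IHN. replace (S N - 0)%nat with (S N) by lia. rewrite Rplus_comm. f_equal.
Qed.

Lemma dsum (f : nat -> R -> R) (g : nat -> R) N x :
  (forall i, (i <= N)%nat -> derivable_pt_lim (f i) x (g i)) ->
  derivable_pt_lim (fun s => sum_f_R0 (fun i => f i s) N) x (sum_f_R0 g N).
Proof.
  induction N; intros H; simpl. apply H; lia.
  apply (derivable_pt_lim_plus (fun s => sum_f_R0 (fun i => f i s) N) (f (S N))).
  apply IHN; intros; apply H; lia. apply H; lia.
Qed.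

Lemma dconst c x : derivable_pt_lim (fun _ => c) x 0.
Proof. exact (derivable_pt_lim_const c x). Qed.

Lemma dmul f g x l m : derivable_pt_lim f x l -> derivable_pt_lim g x m ->
  derivable_pt_lim (fun s => f s * g s) x (l * g x + f x * m).
Proof. intros; apply (derivable_pt_lim_mult f g); auto. Qed.

Lemma dmulc f x l c : derivable_pt_lim f x l -> derivable_pt_lim (fun s => c * f s) x (c * l).
Proof. intros H. eapply dval. apply (dmul (fun _ => c) f); [apply dconst|exact H]. ring. Qed.

Definition ev (c : nat -> R) N t := sum_f_R0 (fun m => c m * t ^ m) N.
Definition sh1 (c : nat -> R) m := match m with O => 0 | S m' => c m' end.
Definition sh2 (c : nat -> R) m := match m with O => 0 | S O => 0 | S (S m') => c m' end.
Definition padd (f g : nat -> R) m := f m + g m.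
Definition pscal (a : R) (f : nat -> R) m := a * f m.

Lemma ev_padd f g N t : ev (padd f g) N t = ev f N t + ev g N t.
Proof. unfold ev, padd. induction N; simpl; try rewrite IHN; ring. Qed.
Lemma ev_pscal a f N t : ev (pscal a f) N t = a * ev f N t.
Proof. unfold ev, pscal. induction N; simpl; try rewrite IHN; ring. Qed.
Lemma ev_sh1 c N t : ev (sh1 c) (S N) t = t * ev c N t.
Proof. unfold ev. induction N. simpl; ring. rewrite tech5, IHN. simpl; ring. Qed.
Lemma ev_sh2 c N t : ev (sh2 c) (S (S N)) t = t^2 * ev c N t.
Proof. unfold ev. induction N. simpl; ring. rewrite tech5, IHN. simpl; ring. Qed.
Lemma ev_tail c N M t : (N <= M)%nat -> (forall m, (N < m)%nat -> c m = 0) ->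
  ev c M t = ev c N t.
Proof.
  intros H Hc. unfold ev. symmetry. apply sum_ext_bound; auto.
  intros j Hj _. rewrite Hc by lia. ring.
Qed.
Lemma ev_deriv (c : nat -> R) N t :
  sum_f_R0 (fun i => c i * INR i * t ^ pred i) (S N) = ev (fun m => INR (S m) * c (S m)) N t.
Proof.
  unfold ev. induction N. simpl; ring. rewrite tech5, IHN, tech5. simpl pred. ring.
Qed.

Lemma ev0 c N : ev c N 0 = c O.
Proof. unfold ev. induction N. simpl; ring. rewrite tech5, IHN. simpl. ring. Qed.

Lemma ev_cont c N x : continuity_pt (ev c N) x.
Proof.
  induction N.
  - unfold ev; simpl. change (continuity_pt (fct_cte (c O * 1)) x). apply continuity_pt_const. intros a b; reflexivity.
  - assert (E: ev c (S N) = (ev c N + mult_real_fct (c (S N)) (fun t => t ^ S N))%F).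
    { apply functional_extensionality. intros t. unfold ev. rewrite tech5. reflexivity. }
    rewrite E. apply continuity_pt_plus; auto. apply continuity_pt_scal.
    apply derivable_continuous_pt. exists (INR (S N) * x ^ pred (S N)). apply derivable_pt_lim_pow.
Qed.

Lemma ev_S c N t : ev c (S N) t = c O + t * ev (fun m => c (S m)) N t.
Proof. unfold ev. induction N. simpl; ring. rewrite tech5, IHN, tech5. simpl; ring. Qed.

Lemma cont_zero f : continuity_pt f 0 -> (forall t, t <> 0 -> f t = 0) -> f 0 = 0.
Proof.
  intros Hc Hz. destruct (Req_dec (f 0) 0) as [|Hne]; auto. exfalso.
  destruct (Hc (Rabs (f 0)) (Rabs_pos_lt _ Hne)) as [al [Hal Hx]].
  assert (h := Hx (al/2)). simpl in h. unfold R_dist in h.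
  rewrite Hz in h by lra. rewrite Rminus_0_r, (Rabs_right (al/2)) in h by lra.
  rewrite Rminus_0_l, Rabs_Ropp in h. apply (Rlt_irrefl (Rabs (f 0))). apply h.
  split. unfold D_x, no_cond. split; auto; lra. lra.
Qed.

Lemma ev_zero N : forall c, (forall t, ev c N t = 0) -> forall m, (m <= N)%nat -> c m = 0.
Proof.
  induction N; intros c H m Hm.
  - assert (m = O) by lia. subst. rewrite <- (ev0 c 0). apply H.
  - assert (H0 : c O = 0) by (rewrite <- (ev0 c (S N)); apply H).
    destruct m. exact H0.
    apply (IHN (fun m => c (S m))); [|lia].
    assert (Hnz : forall t, t <> 0 -> ev (fun m => c (S m)) N t = 0).
    { intros t Ht. specialize (H t). rewrite ev_S, H0 in H.
      apply Rmult_eq_reg_l with t; auto. lra. }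
    intros t. destruct (Req_dec t 0) as [->|Ht]; auto.
    apply (cont_zero (ev (fun m => c (S m)) N)); auto. apply ev_cont.
Qed.

Definition b1 (n : nat) (ab : nat -> R) := fun m => (INR n - INR m) * ab m.
Definition b2 (ab : nat -> R) := fun m => INR (S m) * ab (S m).
Definition Ecoef (n : nat) (Lm Lx Ly : R) (ab abx aby : nat -> R) : nat -> R :=
  padd (pscal Lm abx) (padd (pscal Lm (sh1 aby))
   (padd (pscal (/2*Lx) (padd (b1 n ab) (sh2 (b1 n ab)))) (pscal (/2*Ly) (padd (b2 ab) (sh2 (b2 ab)))))).

Ltac normI := repeat rewrite S_INR; repeat rewrite mult_INR;
  replace (INR 2) with 2 by (simpl; ring).

Lemma closedR (n : nat) (Lm Lx Ly : R) (ab abx aby : nat -> R) L :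
  sum_f_R0 (fun l => (-1)^l * (INR n + 1 - 2*INR l) * Ecoef n Lm Lx Ly ab abx aby (2*l)%nat) L =
  Lm * sum_f_R0 (fun l => (-1)^l*(INR n + 1 - 2*INR l)*abx (2*l)%nat) L
  + Lx * sum_f_R0 (fun l => (-1)^l*(INR n - 2*INR l)*ab (2*l)%nat) L
  - Lm * sum_f_R0 (fun l => (-1)^l*(INR n - 1 - 2*INR l)*aby (S (2*l))) L
  + Ly * sum_f_R0 (fun l => (-1)^l*(2*INR l + 1)*ab (S (2*l))) L
  + (-1)^L * ((INR n - 1 - 2*INR L)*Lm*aby (S (2*L))
      + /2*(INR n - 2*INR L)*(INR n - 1 - 2*INR L)*Lx*ab (2*L)%nat
      + /2*(2*INR L + 1)*(INR n - 1 - 2*INR L)*Ly*ab (S (2*L))).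
Proof.
  induction L.
  - simpl. unfold Ecoef, padd, pscal, sh1, sh2, b1, b2. simpl. field.
  - rewrite !tech5, IHL. replace (2 * S L)%nat with (S (S (2 * L))) by lia.
    unfold Ecoef, padd, pscal, sh1, sh2, b1, b2. cbv beta iota.
    normI. simpl pow. field.
Qed.

Lemma closedI (n : nat) (Lm Lx Ly : R) (ab abx aby : nat -> R) L :
  sum_f_R0 (fun l => (-1)^l * (INR n - 2*INR l) * Ecoef n Lm Lx Ly ab abx aby (S (2*l))) L =
  Lm * sum_f_R0 (fun l => (-1)^l*(INR n - 2*INR l)*abx (S (2*l))) L
  + Lx * sum_f_R0 (fun l => (-1)^l*(INR n - 1 - 2*INR l)*ab (S (2*l))) L
  + Lm * sum_f_R0 (fun l => (-1)^l*(INR n - 2*INR l)*aby (2*l)%nat) L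
  - Ly * sum_f_R0 (fun l => (-1)^l*(2*INR l)*ab (2*l)%nat) L
  + (-1)^L * (/2*(INR n - 1 - 2*INR L)*(INR n - 2 - 2*INR L)*Lx*ab (S (2*L))
      + (INR n - 2*INR L)*(INR L + 1)*Ly*ab (S (S (2*L)))).
Proof.
  induction L.
  - simpl. unfold Ecoef, padd, pscal, sh1, sh2, b1, b2. simpl. field.
  - rewrite !tech5, IHL. replace (2 * S L)%nat with (S (S (2 * L))) by lia.
    unfold Ecoef, padd, pscal, sh1, sh2, b1, b2. cbv beta iota.
    normI. simpl pow. field.
Qed.

Definition abar (n : nat) (a : nat -> R -> R -> R) i x y := if Nat.leb i n then a i x y else 0.

Lemma abar_out n a i x y : (n < i)%nat -> abar n a i x y = 0.
Proof. intros H. unfold abar. destruct (Nat.leb_spec i n); [lia|reflexivity]. Qed.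
Lemma abar_in n a i x y : (i <= n)%nat -> abar n a i x y = a i x y.
Proof. intros H. unfold abar. destruct (Nat.leb_spec i n); [reflexivity|lia]. Qed.

Lemma E_all_zero (Lam Lx Ly : R -> R -> R) (a : nat -> R -> R -> R) (abx aby : nat -> R -> R -> R)
  (n : nat) (x y : R)
  (hLx : forall x y, derivable_pt_lim (fun t => Lam t y) x (Lx x y))
  (hLy : forall x y, derivable_pt_lim (fun t => Lam x t) y (Ly x y))
  (hpos : forall x y, 0 < Lam x y)
  (hax : forall i x y, (i <= n)%nat -> derivable_pt_lim (fun t => a i t y) x (abx i x y))
  (hay : forall i x y, (i <= n)%nat -> derivable_pt_lim (fun t => a i x t) y (aby i x y))
  (habx0 : forall i x y, (n < i)%nat -> abx i x y = 0)
  (haby0 : forall i x y, (n < i)%nat -> aby i x y = 0)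
  (hPB : poisson_zero (hamiltonian Lam) (polyF n a)) :
  forall m, Ecoef n (Lam x y) (Lx x y) (Ly x y) (fun i => abar n a i x y)
              (fun i => abx i x y) (fun i => aby i x y) m = 0.
Proof.
  set (ab := fun i => abar n a i x y).
  set (E := Ecoef n (Lam x y) (Lx x y) (Ly x y) ab (fun i => abx i x y) (fun i => aby i x y)).
  assert (Hab0 : forall i, (n < i)%nat -> ab i = 0) by (intros; apply abar_out; auto).
  assert (HL : Lam x y <> 0) by (specialize (hpos x y); lra).
  assert (Hev : forall t, ev E (S (S n)) t = 0).
  { intros t.
    destruct (hPB x y 1 t) as [Hx [Hy [Hp1 [Hp2 [Fx [Fy [Fp1 [Fp2
      [d1 [d2 [d3 [d4 [d5 [d6 [d7 [d8 Heq]]]]]]]]]]]]]]]].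
    assert (e1 : Hx = - (1 + t^2) * Lx x y / (2 * (Lam x y)^2)).
    { apply (uniqueness_limite _ _ _ _ d1). unfold hamiltonian.
      eapply dval. apply (derivable_pt_lim_div (fun _ => 1^2 + t^2) (fun s => 2 * Lam s y)).
      apply dconst. apply dmulc, hLx. lra. unfold Rsqr. field. auto. }
    assert (e2 : Hy = - (1 + t^2) * Ly x y / (2 * (Lam x y)^2)).
    { apply (uniqueness_limite _ _ _ _ d2). unfold hamiltonian.
      eapply dval. apply (derivable_pt_lim_div (fun _ => 1^2 + t^2) (fun s => 2 * Lam x s)).
      apply dconst. apply dmulc, hLy. lra. unfold Rsqr. field. auto. }
    assert (e3 : Hp1 = 1 / Lam x y).
    { apply (uniqueness_limite _ _ _ _ d3). unfold hamiltonian.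
      eapply dval. apply (derivable_pt_lim_div (fun s => s^2 + t^2) (fun _ => 2 * Lam x y)).
      apply (derivable_pt_lim_plus (fun s => s^2) (fun _ => t^2)). apply derivable_pt_lim_pow. apply dconst.
      apply dconst. lra. unfold Rsqr. simpl. field. auto. }
    assert (e4 : Hp2 = t / Lam x y).
    { apply (uniqueness_limite _ _ _ _ d4). unfold hamiltonian.
      eapply dval. apply (derivable_pt_lim_div (fun s => 1^2 + s^2) (fun _ => 2 * Lam x y)).
      apply (derivable_pt_lim_plus (fun _ => 1^2) (fun s => s^2)). apply dconst. apply derivable_pt_lim_pow.
      apply dconst. lra. unfold Rsqr. simpl. field. auto. }
    assert (e5 : Fx = ev (fun i => abx i x y) n t).
    { apply (uniqueness_limite _ _ _ _ d5). unfold polyF.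
      apply (dsum (fun i s => a i s y * 1 ^ (n - i) * t ^ i)).
      intros i Hi. eapply dval. apply (dmul (fun s => a i s y * 1 ^ (n - i)) (fun _ => t^i)).
      apply (dmul (fun s => a i s y) (fun _ => 1 ^ (n - i))). apply hax; auto. apply dconst. apply dconst.
      rewrite pow1. ring. }
    assert (e6 : Fy = ev (fun i => aby i x y) n t).
    { apply (uniqueness_limite _ _ _ _ d6). unfold polyF.
      apply (dsum (fun i s => a i x s * 1 ^ (n - i) * t ^ i)).
      intros i Hi. eapply dval. apply (dmul (fun s => a i x s * 1 ^ (n - i)) (fun _ => t^i)).
      apply (dmul (fun s => a i x s) (fun _ => 1 ^ (n - i))). apply hay; auto. apply dconst. apply dconst.
      rewrite pow1. ring. }
    assert (e7 : Fp1 = ev (b1 n ab) n t).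
    { apply (uniqueness_limite _ _ _ _ d7). unfold polyF, ev.
      apply (dsum (fun i s => a i x y * s ^ (n - i) * t ^ i)).
      intros i Hi. eapply dval. apply (dmul (fun s => a i x y * s ^ (n - i)) (fun _ => t^i)).
      apply (dmul (fun _ => a i x y) (fun s => s ^ (n - i))). apply dconst. apply derivable_pt_lim_pow. apply dconst.
      unfold b1, ab. rewrite abar_in, !pow1, minus_INR by auto. ring. }
    assert (e8 : Fp2 = ev (b2 ab) n t).
    { apply (uniqueness_limite _ _ _ _ d8). unfold polyF.
      eapply dval. apply (dsum (fun i s => a i x y * 1 ^ (n - i) * s ^ i)).
      intros i Hi. apply (dmul (fun _ => a i x y * 1 ^ (n - i)) (fun s => s^i)). apply dconst. apply derivable_pt_lim_pow.
      unfold b2. rewrite <- ev_deriv.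
      apply sum_ext_bound. lia. intros j Hj. unfold ab. rewrite abar_in, pow1 by auto. ring.
      intros j Hj1 Hj2. assert (j = S n) by lia. subst. rewrite Hab0 by lia. ring. }
    subst Hx Hy Hp1 Hp2 Fx Fy Fp1 Fp2.
    assert (Hb1 : forall m, (n < m)%nat -> b1 n ab m = 0) by (intros; unfold b1; rewrite Hab0; auto; ring).
    assert (Hb2 : forall m, (n <= m)%nat -> b2 ab m = 0) by (intros; unfold b2; rewrite Hab0; [ring|lia]).
    unfold E, Ecoef. rewrite !ev_padd, !ev_pscal, !ev_padd, ev_sh1, !ev_sh2.
    rewrite (ev_tail (fun i => abx i x y) n (S (S n))) by (auto; intros; apply habx0; auto).
    rewrite (ev_tail (fun i => aby i x y) n (S n)) by (auto; intros; apply haby0; auto).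
    rewrite (ev_tail (b1 n ab) n (S (S n))) by auto.
    rewrite (ev_tail (b2 ab) n (S (S n))) by (auto; intros; apply Hb2; lia).
    transitivity (- (Lam x y)^2 * 0); [|ring]. rewrite <- Heq. field. auto. }
  intros m. destruct (Nat.le_gt_cases m (S (S n))) as [Hm|Hm].
  - exact (ev_zero _ E Hev m Hm).
  - destruct m as [|[|m]]; try lia. unfold E, Ecoef, padd, pscal, sh1, sh2, b1, b2.
    rewrite !Hab0, habx0, haby0 by lia. ring.
Qed.

Lemma sum_zero (f : nat -> R) N : (forall l, f l = 0) -> sum_f_R0 f N = 0.
Proof. intros H; induction N; simpl; rewrite ?IHN, H; ring. Qed.

Definition wsum (w : nat -> R) (c : nat -> R) N := sum_f_R0 (fun j => w j * c j) N.

Lemma even_alg (n k : nat) (Lm Lx Ly c2 : R) (ab abx aby : nat -> R)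
  (Hn : n = (2*k)%nat) (Hk : (2 <= k)%nat)
  (Hz : forall i, (n < i)%nat -> ab i = 0 /\ abx i = 0 /\ aby i = 0)
  (HE : forall m, Ecoef n Lm Lx Ly ab abx aby m = 0)
  (HReA : sum_f_R0 (fun j => (-1)^j * ab (2*j)%nat) n = (-1)^k * c2)
  (HImA : sum_f_R0 (fun j => (-1)^j * ab (S (2*j))) n = 0)
  (HReAx : sum_f_R0 (fun j => (-1)^j * abx (2*j)%nat) n = 0)
  (HImAx : sum_f_R0 (fun j => (-1)^j * abx (S (2*j))) n = 0)
  (HImAy : sum_f_R0 (fun j => (-1)^j * aby (S (2*j))) n = 0) :
  let we := fun j => (-1)^j * (INR n - 2 * INR j) in
  let wo := fun j => (-1)^j * (INR n - 2 - 2 * INR j) in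
  let SE := wsum we (fun j => ab (2*j)%nat) (k-1) in
  let SEx := wsum we (fun j => abx (2*j)%nat) (k-1) in
  let SEy := wsum we (fun j => aby (2*j)%nat) (k-1) in
  let SO := wsum wo (fun j => ab (S (2*j))) (k-2) in
  let SOx := wsum wo (fun j => abx (S (2*j))) (k-2) in
  let SOy := wsum wo (fun j => aby (S (2*j))) (k-2) in
  (SEx*Lm + SE*Lx) + ((-SOy)*Lm + (-SO)*Ly) = 0 /\
  ((-SOx)*Lm + (-SO)*Lx) + ((-SEy)*Lm + (-SE + (-1)^k*INR n*c2)*Ly) = 0.
Proof.
  intros we wo SE SEx SEy SO SOx SOy.
  assert (Hn1 : (1 <= n)%nat) by lia.
  assert (extE : forall c : nat -> R, (forall i, (n < i)%nat -> c i = 0) ->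
     wsum we (fun j => c (2*j)%nat) (k-1) = sum_f_R0 (fun l => (-1)^l * (INR n - 2*INR l) * c (2*l)%nat) n).
  { intros c Hc. unfold wsum. apply sum_ext_bound. lia. intros; unfold we; ring.
    intros j Hj1 Hj2. destruct (Nat.eq_dec j k). subst j. rewrite Hn, mult_INR. simpl INR. ring.
    rewrite Hc by lia. ring. }
  assert (extO : forall c : nat -> R, (forall i, (n < i)%nat -> c i = 0) ->
     wsum wo (fun j => c (S (2*j))) (k-2) = sum_f_R0 (fun l => (-1)^l * (INR n - 2 - 2*INR l) * c (S (2*l))) n).
  { intros c Hc. unfold wsum. apply sum_ext_bound. lia. intros; unfold wo; ring.
    intros j Hj1 Hj2. destruct (Nat.eq_dec j (k-1)). subst j. rewrite Hn, minus_INR, mult_INR by lia. simpl INR. ring.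
    rewrite Hc by lia. ring. }
  assert (zab : forall i, (n < i)%nat -> ab i = 0) by (intros; apply Hz; auto).
  assert (zabx : forall i, (n < i)%nat -> abx i = 0) by (intros; apply Hz; auto).
  assert (zaby : forall i, (n < i)%nat -> aby i = 0) by (intros; apply Hz; auto).
  split.
  - pose proof (closedR n Lm Lx Ly ab abx aby n) as R0.
    rewrite sum_zero in R0 by (intros; rewrite HE; ring).
    rewrite (zab (2*n)%nat), (zab (S (2*n))), (zaby (S (2*n))) in R0 by lia.
    rewrite (sum_lin2 (fun l => (-1)^l*(INR n + 1 - 2*INR l)*abx (2*l)%nat) (fun l => (-1)^l*(INR n - 2*INR l)*abx (2*l)%nat) (fun l => (-1)^l * abx (2*l)%nat) 1 1) in R0 by (intros; ring).
    rewrite (sum_lin2 (fun l => (-1)^l*(INR n - 1 - 2*INR l)*aby (S (2*l))) (fun l => (-1)^l*(INR n - 2 - 2*INR l)*aby (S (2*l))) (fun l => (-1)^l * aby (S (2*l))) 1 1) in R0 by (intros; ring).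
    rewrite (sum_lin2 (fun l => (-1)^l*(2*INR l + 1)*ab (S (2*l))) (fun l => (-1)^l*(INR n - 2 - 2*INR l)*ab (S (2*l))) (fun l => (-1)^l * ab (S (2*l))) (-1) (INR n - 1)) in R0 by (intros; ring).
    rewrite HReAx, HImAy, HImA in R0.
    unfold SE, SEx, SO, SOy. rewrite !extE, !extO by auto. lra.
  - pose proof (closedI n Lm Lx Ly ab abx aby n) as R0.
    rewrite sum_zero in R0 by (intros; rewrite HE; ring).
    rewrite (zab (S (2*n))), (zab (S (S (2*n)))) in R0 by lia.
    rewrite (sum_lin2 (fun l => (-1)^l*(INR n - 2*INR l)*abx (S (2*l))) (fun l => (-1)^l*(INR n - 2 - 2*INR l)*abx (S (2*l))) (fun l => (-1)^l * abx (S (2*l))) 1 2) in R0 by (intros; ring).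
    rewrite (sum_lin2 (fun l => (-1)^l*(INR n - 1 - 2*INR l)*ab (S (2*l))) (fun l => (-1)^l*(INR n - 2 - 2*INR l)*ab (S (2*l))) (fun l => (-1)^l * ab (S (2*l))) 1 1) in R0 by (intros; ring).
    rewrite (sum_lin2 (fun l => (-1)^l*(2*INR l)*ab (2*l)%nat) (fun l => (-1)^l*(INR n - 2*INR l)*ab (2*l)%nat) (fun l => (-1)^l * ab (2*l)%nat) (-1) (INR n)) in R0 by (intros; ring).
    rewrite HImAx, HImA, HReA in R0.
    unfold SE, SEy, SO, SOx. rewrite !extE, !extO by auto. lra.
Qed.

Lemma odd_alg (n k : nat) (Lm Lx Ly c2 : R) (ab abx aby : nat -> R)
  (Hn : n = (2*k+1)%nat) (Hk : (1 <= k)%nat)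
  (Hz : forall i, (n < i)%nat -> ab i = 0 /\ abx i = 0 /\ aby i = 0)
  (HE : forall m, Ecoef n Lm Lx Ly ab abx aby m = 0)
  (HReA : sum_f_R0 (fun j => (-1)^j * ab (2*j)%nat) n = 0)
  (HImA : sum_f_R0 (fun j => (-1)^j * ab (S (2*j))) n = (-1)^k * c2)
  (HReAx : sum_f_R0 (fun j => (-1)^j * abx (2*j)%nat) n = 0)
  (HReAy : sum_f_R0 (fun j => (-1)^j * aby (2*j)%nat) n = 0)
  (HImAx : sum_f_R0 (fun j => (-1)^j * abx (S (2*j))) n = 0) :
  let w := fun j => (-1)^j * (INR n - 1 - 2 * INR j) in
  let TE := wsum w (fun j => ab (2*j)%nat) (k-1) in
  let TEx := wsum w (fun j => abx (2*j)%nat) (k-1) in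
  let TEy := wsum w (fun j => aby (2*j)%nat) (k-1) in
  let TO := wsum w (fun j => ab (S (2*j))) (k-1) in
  let TOx := wsum w (fun j => abx (S (2*j))) (k-1) in
  let TOy := wsum w (fun j => aby (S (2*j))) (k-1) in
  (TOx*Lm + TO*Lx) + (TEy*Lm + TE*Ly) = 0 /\
  (TEx*Lm + TE*Lx) + ((-TOy)*Lm + (-TO + (-1)^k*INR n*c2)*Ly) = 0.
Proof.
  intros w TE TEx TEy TO TOx TOy.
  assert (extE : forall c : nat -> R, (forall i, (n < i)%nat -> c i = 0) ->
     wsum w (fun j => c (2*j)%nat) (k-1) = sum_f_R0 (fun l => (-1)^l * (INR n - 1 - 2*INR l) * c (2*l)%nat) n).
  { intros c Hc. unfold wsum. apply sum_ext_bound. lia. intros; unfold w; ring.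
    intros j Hj1 Hj2. destruct (Nat.eq_dec j k). subst j. rewrite Hn, plus_INR, mult_INR. simpl INR. ring.
    rewrite Hc by lia. ring. }
  assert (extO : forall c : nat -> R, (forall i, (n < i)%nat -> c i = 0) ->
     wsum w (fun j => c (S (2*j))) (k-1) = sum_f_R0 (fun l => (-1)^l * (INR n - 1 - 2*INR l) * c (S (2*l))) n).
  { intros c Hc. unfold wsum. apply sum_ext_bound. lia. intros; unfold w; ring.
    intros j Hj1 Hj2. destruct (Nat.eq_dec j k). subst j. rewrite Hn, plus_INR, mult_INR. simpl INR. ring.
    rewrite Hc by lia. ring. }
  assert (zab : forall i, (n < i)%nat -> ab i = 0) by (intros; apply Hz; auto).
  assert (zabx : forall i, (n < i)%nat -> abx i = 0) by (intros; apply Hz; auto).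
  assert (zaby : forall i, (n < i)%nat -> aby i = 0) by (intros; apply Hz; auto).
  split.
  - pose proof (closedI n Lm Lx Ly ab abx aby n) as R0.
    rewrite sum_zero in R0 by (intros; rewrite HE; ring).
    rewrite (zab (S (2*n))), (zab (S (S (2*n)))) in R0 by lia.
    rewrite (sum_lin2 (fun l => (-1)^l*(INR n - 2*INR l)*abx (S (2*l))) (fun l => (-1)^l*(INR n - 1 - 2*INR l)*abx (S (2*l))) (fun l => (-1)^l * abx (S (2*l))) 1 1) in R0 by (intros; ring).
    rewrite (sum_lin2 (fun l => (-1)^l*(INR n - 2*INR l)*aby (2*l)%nat) (fun l => (-1)^l*(INR n - 1 - 2*INR l)*aby (2*l)%nat) (fun l => (-1)^l * aby (2*l)%nat) 1 1) in R0 by (intros; ring).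
    rewrite (sum_lin2 (fun l => (-1)^l*(2*INR l)*ab (2*l)%nat) (fun l => (-1)^l*(INR n - 1 - 2*INR l)*ab (2*l)%nat) (fun l => (-1)^l * ab (2*l)%nat) (-1) (INR n - 1)) in R0 by (intros; ring).
    rewrite HImAx, HReAy, HReA in R0.
    unfold TE, TEy, TO, TOx. rewrite !extE, !extO by auto. lra.
  - pose proof (closedR n Lm Lx Ly ab abx aby n) as R0.
    rewrite sum_zero in R0 by (intros; rewrite HE; ring).
    rewrite (zab (2*n)%nat), (zab (S (2*n))), (zaby (S (2*n))) in R0 by lia.
    rewrite (sum_lin2 (fun l => (-1)^l*(INR n + 1 - 2*INR l)*abx (2*l)%nat) (fun l => (-1)^l*(INR n - 1 - 2*INR l)*abx (2*l)%nat) (fun l => (-1)^l * abx (2*l)%nat) 1 2) in R0 by (intros; ring).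
    rewrite (sum_lin2 (fun l => (-1)^l*(INR n - 2*INR l)*ab (2*l)%nat) (fun l => (-1)^l*(INR n - 1 - 2*INR l)*ab (2*l)%nat) (fun l => (-1)^l * ab (2*l)%nat) 1 1) in R0 by (intros; ring).
    rewrite (sum_lin2 (fun l => (-1)^l*(2*INR l + 1)*ab (S (2*l))) (fun l => (-1)^l*(INR n - 1 - 2*INR l)*ab (S (2*l))) (fun l => (-1)^l * ab (S (2*l))) (-1) (INR n)) in R0 by (intros; ring).
    rewrite HReAx, HReA, HImA in R0.
    unfold TE, TEx, TO, TOy. rewrite !extE, !extO by auto. lra.
Qed.

Lemma m1sq p : ((-1)^p)^2 = 1.
Proof. rewrite <- pow_mult, Nat.mul_comm, pow_mult. simpl. replace (-1 * (-1 * 1)) with 1 by ring. apply pow1. Qed.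

Lemma sum_scal (g : nat -> R) c N : sum_f_R0 (fun j => c * g j) N = c * sum_f_R0 g N.
Proof. rewrite (sum_lin2 _ g g c 0) by (intros; ring). ring. Qed.

Lemma key (f : nat -> R) M v : v = sum_f_R0 (fun j => (-1)^j * f (M - j)%nat) M ->
  sum_f_R0 (fun j => (-1)^j * f j) M + (-1)^(S M) * v = 0.
Proof.
  intros ->. rewrite (sum_rev (fun j => (-1)^j * f (M-j)%nat)).
  rewrite (sum_eq_le (fun j => (-1)^(M-j) * f (M - (M - j))%nat) (fun j => (-1) * ((-1)^(S M)) * ((-1)^j * f j)) M).
  2:{ intros j Hj. replace (M - (M - j))%nat with j by lia.
      replace (S M) with ((M-j) + j + 1)%nat by lia. rewrite !pow_add.
      assert (H2 : (-1)^j * (-1)^j = 1) by (rewrite <- (m1sq j); simpl; ring).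
      set (u := (-1)^j) in *. set (w := (-1)^(M-j)).
      replace (-1 * (w * u * (-1)^1) * (u * f j)) with (w * (u*u) * f j) by (simpl; ring).
      rewrite H2; ring. }
  rewrite sum_scal.
  transitivity (sum_f_R0 (fun j => (-1)^j * f j) M * (1 - ((-1)^(S M))^2)); [ring|rewrite m1sq; ring].
Qed.

Lemma K_even n k a c2 x y (Hn : n = (2*k)%nat) (Hk : (2 <= k)%nat) (hK : kolokoltsov n a c2) :
  sum_f_R0 (fun j => (-1)^j * abar n a (2*j)%nat x y) n = (-1)^k * c2 /\
  sum_f_R0 (fun j => (-1)^j * abar n a (S (2*j)) x y) n = 0.
Proof.
  destruct (hK x y) as [K1 K2]. split.
  - replace (Nat.div2 (n-2)) with (k-1)%nat in K2 by (rewrite Hn; replace (2*k-2)%nat with (2*(k-1))%nat by lia; rewrite Nat.div2_double; auto).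
    pose proof (key (fun j => a (2*j)%nat x y) (k-1) (a n x y - c2)) as Hk2.
    rewrite <- (sum_ext_bound (fun j => (-1)^j * a (2*j)%nat x y) _ k n) by
      (first [lia | intros; rewrite abar_in by lia; ring | intros; rewrite abar_out by lia; ring]).
    replace k with (S (k-1)) at 1 by lia. rewrite tech5.
    replace (S (k-1)) with k in * by lia.
    replace (2 * k)%nat with n by lia.
    enough (e : sum_f_R0 (fun j => (-1)^j * a (2*j)%nat x y) (k-1) + (-1)^k * (a n x y - c2) = 0) by lra.
    apply Hk2. rewrite K2 at 1. ring_simplify. apply sum_eq_le. intros j Hj. f_equal. f_equal. lia.
  - replace (Nat.div2 (n-3)) with (k-2)%nat in K1 by (rewrite Hn; replace (2*k-3)%nat with (S (2*(k-2)))%nat by lia; rewrite Nat.div2_succ_double; auto).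
    pose proof (key (fun j => a (S (2*j)) x y) (k-2) (a (n-1)%nat x y)) as Hk1.
    rewrite <- (sum_ext_bound (fun j => (-1)^j * a (S (2*j)) x y) _ (k-1) n) by
      (first [lia | intros; rewrite abar_in by lia; ring | intros; rewrite abar_out by lia; ring]).
    replace (k-1)%nat with (S (k-2)) at 1 by lia. rewrite tech5.
    replace (S (k-2)) with (k-1)%nat in * by lia.
    replace (S (2 * (k-1)))%nat with (n-1)%nat by lia.
    apply Hk1. rewrite K1 at 1. apply sum_eq_le. intros j Hj. f_equal. f_equal. lia.
Qed.

Lemma K_odd n k a c2 x y (Hn : n = (2*k+1)%nat) (Hk : (1 <= k)%nat) (hK : kolokoltsov n a c2) :
  sum_f_R0 (fun j => (-1)^j * abar n a (2*j)%nat x y) n = 0 /\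
  sum_f_R0 (fun j => (-1)^j * abar n a (S (2*j)) x y) n = (-1)^k * c2.
Proof.
  destruct (hK x y) as [K1 K2]. split.
  - replace (Nat.div2 (n-3)) with (k-1)%nat in K1 by (rewrite Hn; replace (2*k+1-3)%nat with (2*(k-1))%nat by lia; rewrite Nat.div2_double; auto).
    pose proof (key (fun j => a (2*j)%nat x y) (k-1) (a (n-1)%nat x y)) as Hk1.
    rewrite <- (sum_ext_bound (fun j => (-1)^j * a (2*j)%nat x y) _ k n) by
      (first [lia | intros; rewrite abar_in by lia; ring | intros; rewrite abar_out by lia; ring]).
    replace k with (S (k-1)) at 1 by lia. rewrite tech5.
    replace (S (k-1)) with k in * by lia.
    replace (2 * k)%nat with (n-1)%nat by lia.
    apply Hk1. rewrite K1 at 1. apply sum_eq_le. intros j Hj. f_equal. f_equal. lia.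
  - replace (Nat.div2 (n-2)) with (k-1)%nat in K2 by (rewrite Hn; replace (2*k+1-2)%nat with (S (2*(k-1)))%nat by lia; rewrite Nat.div2_succ_double; auto).
    pose proof (key (fun j => a (S (2*j)) x y) (k-1) (a n x y - c2)) as Hk2.
    rewrite <- (sum_ext_bound (fun j => (-1)^j * a (S (2*j)) x y) _ k n) by
      (first [lia | intros; rewrite abar_in by lia; ring | intros; rewrite abar_out by lia; ring]).
    replace k with (S (k-1)) at 1 by lia. rewrite tech5.
    replace (S (k-1)) with k in * by lia.
    replace (S (2 * k))%nat with n by lia.
    enough (e : sum_f_R0 (fun j => (-1)^j * a (S (2*j)) x y) (k-1) + (-1)^k * (a n x y - c2) = 0) by lra.
    apply Hk2. rewrite K2 at 1. ring_simplify. apply sum_eq_le. intros j Hj. f_equal. f_equal. lia.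
Qed.

Lemma dwsum_x (w : nat -> R) (idx : nat -> nat) (A Ax : nat -> R -> R -> R) M x y :
  (forall j, (j <= M)%nat -> derivable_pt_lim (fun t => A (idx j) t y) x (Ax (idx j) x y)) ->
  derivable_pt_lim (fun t => sum_f_R0 (fun j => w j * A (idx j) t y) M) x (wsum w (fun j => Ax (idx j) x y) M).
Proof. intros H. apply (dsum (fun j t => w j * A (idx j) t y)). intros; apply dmulc; auto. Qed.

Lemma dwsum_y (w : nat -> R) (idx : nat -> nat) (A Ay : nat -> R -> R -> R) M x y :
  (forall j, (j <= M)%nat -> derivable_pt_lim (fun t => A (idx j) x t) y (Ay (idx j) x y)) ->
  derivable_pt_lim (fun t => sum_f_R0 (fun j => w j * A (idx j) x t) M) y (wsum w (fun j => Ay (idx j) x y) M).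
Proof. intros H. apply (dsum (fun j t => w j * A (idx j) x t)). intros; apply dmulc; auto. Qed.

Lemma deriv_const_zero (f : R -> R) c x l : (forall s, f s = c) -> derivable_pt_lim f x l -> l = 0.
Proof.
  intros Hf Hd. replace f with (fun _ : R => c) in Hd by (apply functional_extensionality; intros; auto).
  exact (uniqueness_limite _ _ _ _ Hd (dconst c x)).
Qed.

Lemma dopp f x l : derivable_pt_lim f x l -> derivable_pt_lim (fun s => - f s) x (- l).
Proof. intros H. exact (derivable_pt_lim_opp f x l H). Qed.

Lemma dplus f g x l m : derivable_pt_lim f x l -> derivable_pt_lim g x m ->
  derivable_pt_lim (fun s => f s + g s) x (l + m).
Proof. intros; apply (derivable_pt_lim_plus f g); auto. Qed.

Theorem theorem2
  (e1x e1y e2x e2y : R) (Lam : R -> R -> R) (n : nat)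
  (a : nat -> R -> R -> R) (c2 : R)
  (hGamma : is_lattice_basis e1x e1y e2x e2y)
  (hLam_smooth : smooth2 Lam) (hLam_per : periodic e1x e1y e2x e2y Lam)
  (hLam_pos : forall x y, 0 < Lam x y)
  (hn : (3 <= n)%nat)
  (ha_smooth : forall i, (i <= n)%nat -> smooth2 (a i))
  (ha_per : forall i, (i <= n)%nat -> periodic e1x e1y e2x e2y (a i))
  (hPB : poisson_zero (hamiltonian Lam) (polyF n a))
  (hK : kolokoltsov n a c2) :
  (forall k : nat, n = (2 * k)%nat ->
     div_free (fun x y => Se n k a x y * Lam x y)
              (fun x y => - So n k a x y * Lam x y)
              (fun x y => (- Se n k a x y + (-1) ^ k * INR n * c2) * Lam x y)) /\
  (forall k : nat, n = (2 * k + 1)%nat ->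
     div_free (fun x y => To n k a x y * Lam x y)
              (fun x y => Te n k a x y * Lam x y)
              (fun x y => (- To n k a x y + (-1) ^ k * INR n * c2) * Lam x y)).
Proof.
  destruct hLam_smooth as [DL [DL0 HDL]].
  set (Lx := DL (false :: nil)). set (Ly := DL (true :: nil)).
  assert (hLx : forall x y, derivable_pt_lim (fun t => Lam t y) x (Lx x y)).
  { intros x y. destruct (HDL nil) as [_ [H _]]. rewrite DL0 in H. apply H. }
  assert (hLy : forall x y, derivable_pt_lim (fun t => Lam x t) y (Ly x y)).
  { intros x y. destruct (HDL nil) as [_ [_ H]]. rewrite DL0 in H. apply H. }
  assert (Hch : forall i, {p : (R -> R -> R) * (R -> R -> R) | forall x y,
      derivable_pt_lim (fun t => abar n a i t y) x (fst p x y) /\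
      derivable_pt_lim (fun t => abar n a i x t) y (snd p x y) /\
      ((n < i)%nat -> fst p x y = 0 /\ snd p x y = 0)}).
  { intros i. apply constructive_indefinite_description.
    destruct (Nat.le_gt_cases i n) as [Hi|Hi].
    - destruct (ha_smooth i Hi) as [D [D0 HD]]. exists (D (false::nil), D (true::nil)).
      intros x y. simpl. unfold abar. destruct (Nat.leb_spec i n); [|lia]. rewrite <- D0.
      split; [apply HD|split; [apply HD|lia]].
    - exists ((fun _ _ => 0), (fun _ _ => 0)). intros x y. simpl. unfold abar.
      destruct (Nat.leb_spec i n); [lia|]. split; [apply dconst|split; [apply dconst|auto]]. }
  set (abx := fun i => fst (proj1_sig (Hch i))).
  set (aby := fun i => snd (proj1_sig (Hch i))).
  assert (dbx : forall i x y, derivable_pt_lim (fun t => abar n a i t y) x (abx i x y))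
    by (intros; apply (proj2_sig (Hch i))).
  assert (dby : forall i x y, derivable_pt_lim (fun t => abar n a i x t) y (aby i x y))
    by (intros; apply (proj2_sig (Hch i))).
  assert (zbx : forall i x y, (n < i)%nat -> abx i x y = 0)
    by (intros; apply (proj2_sig (Hch i)); auto).
  assert (zby : forall i x y, (n < i)%nat -> aby i x y = 0)
    by (intros; apply (proj2_sig (Hch i)); auto).
  assert (hax : forall i x y, (i <= n)%nat -> derivable_pt_lim (fun t => a i t y) x (abx i x y)).
  { intros i x y Hi. pose proof (dbx i x y) as h. unfold abar in h.
    destruct (Nat.leb_spec i n); [exact h|lia]. }
  assert (hay : forall i x y, (i <= n)%nat -> derivable_pt_lim (fun t => a i x t) y (aby i x y)).
  { intros i x y Hi. pose proof (dby i x y) as h. unfold abar in h.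
    destruct (Nat.leb_spec i n); [exact h|lia]. }
  assert (HE : forall x y m, Ecoef n (Lam x y) (Lx x y) (Ly x y) (fun i => abar n a i x y)
                  (fun i => abx i x y) (fun i => aby i x y) m = 0)
    by (intros; apply E_all_zero; auto).
  assert (Hz : forall x y i, (n < i)%nat -> abar n a i x y = 0 /\ abx i x y = 0 /\ aby i x y = 0)
    by (intros; split; [apply abar_out|split]; auto).
  split.
  - intros k Hk x y. assert (Hk2 : (2 <= k)%nat) by lia.
    assert (KR : forall x y, sum_f_R0 (fun j => (-1)^j * abar n a (2*j)%nat x y) n = (-1)^k * c2)
      by (intros; apply (K_even n k a c2); auto).
    assert (KI : forall x y, sum_f_R0 (fun j => (-1)^j * abar n a (S (2*j)) x y) n = 0)
      by (intros; apply (K_even n k a c2); auto).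
    assert (Rx : sum_f_R0 (fun j => (-1)^j * abx (2*j)%nat x y) n = 0).
    { apply (deriv_const_zero (fun s => sum_f_R0 (fun j => (-1)^j * abar n a (2*j)%nat s y) n) ((-1)^k*c2) x).
      intros s; apply KR. apply (dwsum_x (fun j => (-1)^j) (fun j => (2*j)%nat) (abar n a) abx). intros; apply dbx. }
    assert (Ix : sum_f_R0 (fun j => (-1)^j * abx (S (2*j)) x y) n = 0).
    { apply (deriv_const_zero (fun s => sum_f_R0 (fun j => (-1)^j * abar n a (S (2*j)) s y) n) 0 x).
      intros s; apply KI. apply (dwsum_x (fun j => (-1)^j) (fun j => S (2*j)) (abar n a) abx). intros; apply dbx. }
    assert (Iy : sum_f_R0 (fun j => (-1)^j * aby (S (2*j)) x y) n = 0).
    { apply (deriv_const_zero (fun s => sum_f_R0 (fun j => (-1)^j * abar n a (S (2*j)) x s) n) 0 y).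
      intros s; apply KI. apply (dwsum_y (fun j => (-1)^j) (fun j => S (2*j)) (abar n a) aby). intros; apply dby. }
    pose proof (even_alg n k (Lam x y) (Lx x y) (Ly x y) c2 (fun i => abar n a i x y)
      (fun i => abx i x y) (fun i => aby i x y) Hk Hk2 (Hz x y) (HE x y) (KR x y) (KI x y) Rx Ix Iy) as [A1 A2].
    cbv beta zeta in A1, A2.
    set (we := fun j => (-1)^j * (INR n - 2 * INR j)) in *.
    set (wo := fun j => (-1)^j * (INR n - 2 - 2 * INR j)) in *.
    assert (eSe : forall x y, Se n k a x y = wsum we (fun j => abar n a (2*j)%nat x y) (k-1)).
    { intros. unfold Se, wsum. apply sum_eq_le. intros; rewrite abar_in by lia; reflexivity. }
    assert (eSo : forall x y, So n k a x y = wsum wo (fun j => abar n a (S (2*j)) x y) (k-2)).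
    { intros. unfold So, wsum. apply sum_eq_le. intros; rewrite abar_in by lia; rewrite Nat.add_1_r; reflexivity. }
    assert (cO : forall c : nat -> R, wsum wo (fun j => c (2*j+1)%nat) (k-2) = wsum wo (fun j => c (S (2*j))) (k-2)).
    { intros. unfold wsum. apply sum_eq_le. intros; rewrite Nat.add_1_r; reflexivity. }
    split.
    + eexists; eexists; split; [|split].
      * apply (dmul (fun t => Se n k a t y) (fun t => Lam t y)); [|apply hLx].
        apply (dwsum_x we (fun j => (2*j)%nat) a abx). intros; apply hax; lia.
      * apply (dmul (fun t => - So n k a x t) (fun t => Lam x t)); [|apply hLy].
        apply dopp. apply (dwsum_y wo (fun j => (2*j+1)%nat) a aby). intros; apply hay; lia.
      * cbv beta. rewrite eSe, eSo, (cO (fun i => aby i x y)). lra.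
    + eexists; eexists; split; [|split].
      * apply (dmul (fun t => - So n k a t y) (fun t => Lam t y)); [|apply hLx].
        apply dopp. apply (dwsum_x wo (fun j => (2*j+1)%nat) a abx). intros; apply hax; lia.
      * apply (dmul (fun t => - Se n k a x t + (-1) ^ k * INR n * c2) (fun t => Lam x t)); [|apply hLy].
        apply dplus; [|apply dconst]. apply dopp. apply (dwsum_y we (fun j => (2*j)%nat) a aby). intros; apply hay; lia.
      * cbv beta. rewrite eSe, eSo, (cO (fun i => abx i x y)). lra.
  - intros k Hk x y. assert (Hk1 : (1 <= k)%nat) by lia.
    assert (KR : forall x y, sum_f_R0 (fun j => (-1)^j * abar n a (2*j)%nat x y) n = 0)
      by (intros; apply (K_odd n k a c2); auto).
    assert (KI : forall x y, sum_f_R0 (fun j => (-1)^j * abar n a (S (2*j)) x y) n = (-1)^k * c2)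
      by (intros; apply (K_odd n k a c2); auto).
    assert (Rx : sum_f_R0 (fun j => (-1)^j * abx (2*j)%nat x y) n = 0).
    { apply (deriv_const_zero (fun s => sum_f_R0 (fun j => (-1)^j * abar n a (2*j)%nat s y) n) 0 x).
      intros s; apply KR. apply (dwsum_x (fun j => (-1)^j) (fun j => (2*j)%nat) (abar n a) abx). intros; apply dbx. }
    assert (Ry : sum_f_R0 (fun j => (-1)^j * aby (2*j)%nat x y) n = 0).
    { apply (deriv_const_zero (fun s => sum_f_R0 (fun j => (-1)^j * abar n a (2*j)%nat x s) n) 0 y).
      intros s; apply KR. apply (dwsum_y (fun j => (-1)^j) (fun j => (2*j)%nat) (abar n a) aby). intros; apply dby. }
    assert (Ix : sum_f_R0 (fun j => (-1)^j * abx (S (2*j)) x y) n = 0).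
    { apply (deriv_const_zero (fun s => sum_f_R0 (fun j => (-1)^j * abar n a (S (2*j)) s y) n) ((-1)^k*c2) x).
      intros s; apply KI. apply (dwsum_x (fun j => (-1)^j) (fun j => S (2*j)) (abar n a) abx). intros; apply dbx. }
    pose proof (odd_alg n k (Lam x y) (Lx x y) (Ly x y) c2 (fun i => abar n a i x y)
      (fun i => abx i x y) (fun i => aby i x y) Hk Hk1 (Hz x y) (HE x y) (KR x y) (KI x y) Rx Ry Ix) as [A1 A2].
    cbv beta zeta in A1, A2.
    set (w := fun j => (-1)^j * (INR n - 1 - 2 * INR j)) in *.
    assert (eTe : forall x y, Te n k a x y = wsum w (fun j => abar n a (2*j)%nat x y) (k-1)).
    { intros. unfold Te, wsum. apply sum_eq_le. intros; rewrite abar_in by lia; reflexivity. }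
    assert (eTo : forall x y, To n k a x y = wsum w (fun j => abar n a (S (2*j)) x y) (k-1)).
    { intros. unfold To, wsum. apply sum_eq_le. intros; rewrite abar_in by lia; rewrite Nat.add_1_r; reflexivity. }
    assert (cO : forall c : nat -> R, wsum w (fun j => c (2*j+1)%nat) (k-1) = wsum w (fun j => c (S (2*j))) (k-1)).
    { intros. unfold wsum. apply sum_eq_le. intros; rewrite Nat.add_1_r; reflexivity. }
    split.
    + eexists; eexists; split; [|split].
      * apply (dmul (fun t => To n k a t y) (fun t => Lam t y)); [|apply hLx].
        apply (dwsum_x w (fun j => (2*j+1)%nat) a abx). intros; apply hax; lia.
      * apply (dmul (fun t => Te n k a x t) (fun t => Lam x t)); [|apply hLy].
        apply (dwsum_y w (fun j => (2*j)%nat) a aby). intros; apply hay; lia.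
      * cbv beta. rewrite eTe, eTo, (cO (fun i => abx i x y)). lra.
    + eexists; eexists; split; [|split].
      * apply (dmul (fun t => Te n k a t y) (fun t => Lam t y)); [|apply hLx].
        apply (dwsum_x w (fun j => (2*j)%nat) a abx). intros; apply hax; lia.
      * apply (dmul (fun t => - To n k a x t + (-1) ^ k * INR n * c2) (fun t => Lam x t)); [|apply hLy].
        apply dplus; [|apply dconst]. apply dopp. apply (dwsum_y w (fun j => (2*j+1)%nat) a aby). intros; apply hay; lia.
      * cbv beta. rewrite eTe, eTo, (cO (fun i => aby i x y)). lra.
Qed.
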